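(* Let $n\ge2$ and $0\le m\le n(n-1)$. For each vertex $i$ of $\mathbb G(n,m)$ with in-degree $d_i$, the tails of its $d_i$ incoming arcs are exactly the $d_i$ smallest elements of $\{1,\dots,n\}\setminus\{i\}$.
   Context: For integers $n\ge2$ and $0\le m\le n(n-1)$, $\mathbb G(n,m)$ is the simple directed graph on vertex set $\{1,\dots,n\}$ whose arc set is $\{(\lceil \frac{i}{n-1}\rceil,\ n-((i-1)\bmod n)) : i=1,\dots,m\}$, where an arc $(j,k)$ goes from tail $j$ to head $k$ and $a\bmod b\in\{0,\dots,b-1\}$; these $m$ pairs are pairwise distinct pairs of distinct vertices. *)

(* Defs.v *)
From mathcomp Require Import all_boot.
Set Implicit Arguments. Unset Strict Implicit. Unset Printing Implicit Defensive.

Definition ceil_div (a b : nat) : nat := (a + b - 1) %/ b.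

(* The i-th arc (i = 1..m) of G(n,m): (ceil(i/(n-1)), n - ((i-1) mod n)). *)
Definition arc_tail (n i : nat) : nat := ceil_div i (n - 1).
Definition arc_head (n i : nat) : nat := n - ((i - 1) %% n).

Definition arc_indices (m : nat) : seq nat := iota 1 m.

Definition in_tails (n m v : nat) : seq nat :=
  [seq arc_tail n i | i <- arc_indices m & arc_head n i == v].

Definition in_degree (n m v : nat) : nat :=
  count (fun i => arc_head n i == v) (arc_indices m).

Definition smallest_others (n v d : nat) : seq nat :=
  take d [seq j <- iota 1 n | j != v].

(* Main.v *)
Require Import Defs.
From mathcomp Require Import all_boot zify.

Lemma tailE n i : 2 <= n -> 0 < i -> arc_tail n i = (i.-1 %/ (n-1)).+1.
Proof.
move=> hn hi; rewrite /arc_tail /ceil_div.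
have -> : i + (n - 1) - 1 = i.-1 + (n-1) by lia.
have hN : 0 < n - 1 by lia.
by rewrite divnDr ?dvdnn // divnn hN addn1.
Qed.

Lemma headE n i : arc_head n i = n - (i.-1 %% n).
Proof. by rewrite /arc_head subn1. Qed.

Lemma tail_bounds n i : 2 <= n -> 0 < i -> i <= n * (n-1) -> i.-1 %/ (n-1) < n.
Proof.
move=> hn hi hm. rewrite ltn_divLR; lia.
Qed.

Lemma head_neq n i : 2 <= n -> 0 < i -> i <= n * (n-1) ->
  n - (i.-1 %% n) <> (i.-1 %/ (n-1)).+1.
Proof.
move=> hn hi hm.
have hq := @tail_bounds n i hn hi hm.
have e1 := divn_eq i.-1 (n-1). have e2 := divn_eq i.-1 n.
have r1 : i.-1 %% (n-1) < n-1 by rewrite ltn_pmod //; lia.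
have r2 : i.-1 %% n < n by rewrite ltn_pmod //; lia.
move: hq e1 e2 r1 r2.
move: (i.-1) (i.-1 %/ (n-1)) (i.-1 %% (n-1)) (i.-1 %/ n) (i.-1 %% n) => k q r a b.
move=> hq e1 e2 r1 r2 heq.
have hb : b = n - q.+1 by lia.
subst b.
have [N hN] : exists N, n = N.+1 by exists n.-1; lia.
subst n. rewrite subSS subn0 in e1 r1 hm.
have h : (a + 1) * N.+1 = q * N.+1 + r + 1 by lia.
case: (leqP (a+1) q) => h2.
  have := leq_mul h2 (leqnn N.+1); lia.
have := leq_mul h2 (leqnn N.+1); lia.
Qed.

Lemma inj n i j : 2 <= n -> 0 < i -> 0 < j ->
  i.-1 %/ (n-1) = j.-1 %/ (n-1) -> i.-1 %% n = j.-1 %% n -> i = j.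
Proof.
move=> hn hi hj.
have e1 := divn_eq i.-1 (n-1). have e2 := divn_eq i.-1 n.
have f1 := divn_eq j.-1 (n-1). have f2 := divn_eq j.-1 n.
have r1 : i.-1 %% (n-1) < n-1 by rewrite ltn_pmod //; lia.
have s1 : j.-1 %% (n-1) < n-1 by rewrite ltn_pmod //; lia.
move: e1 e2 f1 f2 r1 s1.
move=> e1 e2 f1 f2 r1 s1 hq hb.
rewrite -hq -hb in f1 f2.
suff e : i.-1 = j.-1 by rewrite -(prednK hi) -(prednK hj) e.
move: e1 e2 f1 f2 r1 s1; clear hq hb.
move: (i.-1) (i.-1 %/ (n-1)) (i.-1 %% (n-1)) (i.-1 %/ n) (i.-1 %% n) => k q r a b.
move: (j.-1) (j.-1 %% (n-1)) (j.-1 %/ n) => k' r' a'.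
move=> e1 e2 f1 f2 r1 s1.
have [N hN] : exists N, n = N.+1 by exists n.-1; lia.
subst n. rewrite subSS subn0 in e1 r1 f1 s1.
have h : r + a' * N.+1 = r' + a * N.+1 by lia.
case: (ltngtP a a') => h2.
- have := leq_mul h2 (leqnn N.+1); lia.
- have := leq_mul h2 (leqnn N.+1); lia.
- subst a'; lia.
Qed.

Lemma exists_arc n t v : 2 <= n -> 1 <= t <= n -> 1 <= v <= n -> t != v ->
  exists i, [/\ 0 < i, i <= t * (n-1), i.-1 %/ (n-1) = t.-1 & n - i.-1 %% n = v].
Proof.
move=> hn /andP[t1 tn] /andP[v1 vn] tv.
have [N hN] : exists N, n = N.+1 by exists n.-1; lia.
subst n. rewrite subSS subn0.
have e := divn_eq (N.+1 - v + t.-1) N.+1.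
have rl : (N.+1 - v + t.-1) %% N.+1 < N.+1 by rewrite ltn_pmod.
move: e rl. move: ((N.+1 - v + t.-1) %/ N.+1) ((N.+1 - v + t.-1) %% N.+1) => a r e rl.
have rN : r < N.
  rewrite ltn_neqAle -ltnS rl andbT; apply/eqP => hr; subst r.
  case: a e => [|a] e; first by lia.
  case: a e => [|a] e; first by move/eqP: tv; lia.
  have := leq_mul (leqnn N.+1) (leqnn 2); lia.
have aq : a <= t.-1.
  rewrite leqNgt; apply/negP => h.
  have := leq_mul h (leqnn N.+1); have := leq_mul t1 (leqnn N); lia.
exists (t.-1 * N + r).+1; split => //=.
- have := leq_mul (leqnn t.-1) (leqnn N).
  have -> : t * N = t.-1 * N + N by rewrite -{1}(prednK t1) mulSn addnC.
  lia.
- by rewrite divnMDl ?(divn_small rN) ?addn0 //; lia.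
- have -> : t.-1 * N + r = (t.-1 - a) * N.+1 + (N.+1 - v).
    rewrite mulnBl. have := leq_mul aq (leqnn N.+1). 
    rewrite !mulnS. have := leq_mul aq (leqnn N). lia.
  rewrite modnMDl modn_small; lia.
Qed.

Lemma lower n i : 0 < n - 1 -> (i.-1 %/ (n-1)) * (n-1) <= i.-1.
Proof. move=> h. by rewrite {2}(divn_eq i.-1 (n-1)) leq_addr. Qed.

Lemma filter_prefix (s : seq nat) (P : pred nat) : sorted ltn s ->
  {in s &, forall x y, x < y -> P y -> P x} -> filter P s = take (count P s) s.
Proof.
elim: s => [|x s IH] //= hs hP.
have hs' := path_sorted hs.
case: ifP => Px.
  have hP' : {in s &, forall x y, x < y -> P y -> P x}.
    by move=> a b ha hb; apply: hP; rewrite inE ?ha ?hb orbT.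
  by rewrite add1n /= IH.
have hx := order_path_min ltn_trans hs.
have nh : ~~ has P s.
  apply/hasP => -[y ys Py].
  have := hP x y; rewrite !inE eqxx ys orbT => /(_ isT isT).
  by rewrite Px (allP hx y ys) Py => /(_ isT isT).
have c0 : count P s = 0 by move: nh; rewrite has_count; case: (count P s).
by rewrite c0 add0n /=; apply/eqP; move: nh; rewrite has_filter negbK.
Qed.

Theorem lemma11 (n m : nat) :
  2 <= n -> m <= n * (n - 1) ->
  forall v : nat, 1 <= v <= n ->
    in_tails n m v =i smallest_others n v (in_degree n m v).
Proof.
move=> hn hm v /andP[v1 vn].
have hN : 0 < n - 1 by lia.
set A := in_tails n m v. set s := [seq j <- iota 1 n | j != v].
have memA : forall t, t \in A ->
    exists i, [/\ 0 < i <= m, arc_head n i = v & t = arc_tail n i].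
  move=> t /mapP [i]; rewrite mem_filter mem_iota => /andP [/eqP hh hi] ->.
  exists i; split => //; lia.
have Amem : forall i, 0 < i <= m -> arc_head n i = v -> arc_tail n i \in A.
  move=> i hi hh; apply/mapP; exists i => //.
  rewrite mem_filter mem_iota hh eqxx /=; lia.
have sub : {subset A <= s}.
  move=> t /memA [i [/andP [i0 im] hh ->]].
  have im' : i <= n * (n-1) by apply: leq_trans hm.
  have hb := @tail_bounds n i hn i0 im'.
  have hne := @head_neq n i hn i0 im'.
  rewrite mem_filter mem_iota tailE //; apply/andP; split.
    by apply/eqP => e; apply: hne; rewrite -headE hh -e.
  by rewrite /= add1n ltnS.
  
have uA : uniq A.
  rewrite /A /in_tails map_inj_in_uniq ?filter_uniq ?iota_uniq //.
  move=> i j; rewrite !mem_filter !mem_iota => /andP [/eqP hi /andP [i0 _]]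
    /andP [/eqP hj /andP [j0 _]].
  rewrite !tailE // => -[e]; apply: (@inj n) => //.
  move: hi hj; rewrite !headE => hi hj.
  have := ltn_pmod i.-1 (ltnW hn). have := ltn_pmod j.-1 (ltnW hn). lia.
have down : {in s &, forall x y, x < y -> y \in A -> x \in A}.
  move=> x y; rewrite !mem_filter !mem_iota => /andP [xv /andP [x1 xn]] _ xy.
  move=> /memA [i [/andP [i0 im] hh ey]]; subst y.
  rewrite tailE // in xy.
  have [i' [i'0 i'x q' h']] : exists i', [/\ 0 < i', i' <= x * (n-1),
      i'.-1 %/ (n-1) = x.-1 & n - i'.-1 %% n = v].
    apply: exists_arc => //; apply/andP; split; lia.
  have -> : x = arc_tail n i' by rewrite tailE // q'; lia.
  apply Amem; last by rewrite headE.
  have hl := @lower n i hN.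
  have hx : x <= i.-1 %/ (n-1) by rewrite -ltnS.
  have := leq_mul hx (leqnn (n-1)).
  move: hl xy hx q'; move: (i.-1 %/ (n-1)) => q hl xy hx _ hmul. lia.
have dA : in_degree n m v = count (mem A) s.
  have -> : in_degree n m v = size A by rewrite /A /in_tails size_map size_filter.
  rewrite -size_filter; apply/perm_size; apply: uniq_perm => //.
    by do 2 apply: filter_uniq; apply: iota_uniq.
  by move=> x; rewrite mem_filter; apply/idP/andP => [h|[]//]; split => //; apply: sub.
rewrite /smallest_others -/s dA -filter_prefix.
- by move=> x; rewrite mem_filter; apply/idP/andP => [h|[]//]; split => //; apply: sub.
- by apply: sorted_filter; [apply: ltn_trans | apply: iota_ltn_sorted].
- exact: down.
Qed.
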